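(* Let $m,n$ be positive integers. (i) For every $A\in[0,1)^{m\times n}$, $\Lambda_A(m,n)=[0,1)^m\setminus\mathbf{Bad}_A(m,n)$. (ii) For every $\boldsymbol{\gamma}\in[0,1)^m$, $\Lambda^{\boldsymbol{\gamma}}(m,n)=[0,1)^{m\times n}\setminus\mathbf{Bad}^{\boldsymbol{\gamma}}(m,n)$.
   Context: $[0,1)^{m\times n}$ is the set of real $m\times n$ matrices with entries in $[0,1)$. For $\boldsymbol{x}\in\mathbb{R}^n$, $\|\boldsymbol{x}\|=\max_i|x_i|$; for $\boldsymbol{y}\in\mathbb{R}^m$, $\langle\boldsymbol{y}\rangle=\min_{\boldsymbol{p}\in\mathbb{Z}^m}\|\boldsymbol{y}-\boldsymbol{p}\|$. For $\psi:\mathbb{N}\to[0,\infty)$, $W_{m,n}(\psi)$ is the set of pairs $(A,\boldsymbol{\gamma})\in[0,1)^{m\times n}\times[0,1)^m$ such that $\langle A\boldsymbol{q}-\boldsymbol{\gamma}\rangle<\psi(\|\boldsymbol{q}\|)$ for infinitely many $\boldsymbol{q}\in\mathbb{Z}^n$. ''Decreasing'' means non-increasing. $\mathcal{C}$ is the set of decreasing $\psi:\mathbb{N}\to[0,\infty)$ with $\sum_{q\ge1}q^{n-1}\psi(q)^m<\infty$. $\Lambda(m,n)=\bigcup_{\psi\in\mathcal{C}}W_{m,n}(\psi)$, $\Lambda_A(m,n)=\{\boldsymbol{\gamma}:(A,\boldsymbol{\gamma})\in\Lambda(m,n)\}$, $\Lambda^{\boldsymbol{\gamma}}(m,n)=\{A:(A,\boldsymbol{\gamma})\in\Lambda(m,n)\}$.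 $\mathbf{Bad}(m,n)=\{(A,\boldsymbol{\gamma}):\liminf_{\boldsymbol{q}\in\mathbb{Z}^n,\|\boldsymbol{q}\|\to\infty}\|\boldsymbol{q}\|^n\langle A\boldsymbol{q}-\boldsymbol{\gamma}\rangle^m>0\}$, $\mathbf{Bad}_A(m,n)=\{\boldsymbol{\gamma}\in[0,1)^m:(A,\boldsymbol{\gamma})\in\mathbf{Bad}(m,n)\}$, $\mathbf{Bad}^{\boldsymbol{\gamma}}(m,n)=\{A\in[0,1)^{m\times n}:(A,\boldsymbol{\gamma})\in\mathbf{Bad}(m,n)\}$. *)

(* Defs.v *)
From HB Require Import structures.
From mathcomp Require Import all_boot all_order all_algebra.
From mathcomp Require Import all_classical all_reals all_analysis.
Set Implicit Arguments. Unset Strict Implicit. Unset Printing Implicit Defensive.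
Import Order.TTheory GRing.Theory Num.Theory numFieldNormedType.Exports.
Local Open Scope classical_set_scope.
Local Open Scope ring_scope.

Section Defs.
Variable R : realType.

Definition supnorm {m : nat} (y : 'cV[R]_m) : R := \big[Num.max/0]_(i < m) `|y i ord0|.

Definition isupnorm {n : nat} (q : 'cV[int]_n) : nat := \max_(i < n) absz (q i ord0).

(* <y> = min over p in Z^m of ||y - p||  (taken as an infimum; it is attained) *)
Definition distZ {m : nat} (y : 'cV[R]_m) : R :=
  inf [set supnorm (y - map_mx (fun z : int => z%:~R) p) | p in [set: 'cV[int]_m]].

Definition Aq {m n : nat} (A : 'M[R]_(m, n)) (q : 'cV[int]_n) : 'cV[R]_m :=
  A *m map_mx (fun z : int => z%:~R) q.

Definition in_unit_mx {m n : nat} (A : 'M[R]_(m, n)) : Prop :=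
  forall i j, 0 <= A i j < 1.

Definition W (m n : nat) (psi : nat -> R) (A : 'M[R]_(m, n)) (g : 'cV[R]_m) : Prop :=
  in_unit_mx A /\ in_unit_mx g /\
  infinite_set [set q : 'cV[int]_n | distZ (Aq A q - g) < psi (isupnorm q)].

(* the class C: psi : N -> [0,oo) decreasing, sum_{q>=1} q^(n-1) psi(q)^m < oo.
   N = {1,2,...}: the value psi 0 is irrelevant and left unconstrained. *)
Definition classC (m n : nat) (psi : nat -> R) : Prop :=
  (forall k, (1 <= k)%N -> 0 <= psi k) /\
  (forall a b, (1 <= a <= b)%N -> psi b <= psi a) /\
  cvgn (series (fun k : nat => (k.+1)%:R ^+ (n.-1) * psi k.+1 ^+ m)).

Definition Lambda (m n : nat) (A : 'M[R]_(m, n)) (g : 'cV[R]_m) : Prop :=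
  exists psi, classC m n psi /\ W psi A g.

(* Bad(m,n): liminf_{||q|| -> oo} ||q||^n <Aq - g>^m > 0, i.e. there are c > 0
   and N such that ||q||^n <Aq-g>^m >= c whenever ||q|| >= N. *)
Definition Bad (m n : nat) (A : 'M[R]_(m, n)) (g : 'cV[R]_m) : Prop :=
  in_unit_mx A /\ in_unit_mx g /\
  exists c : R, 0 < c /\ exists N : nat, forall q : 'cV[int]_n,
    (N <= isupnorm q)%N -> c <= (isupnorm q)%:R ^+ n * distZ (Aq A q - g) ^+ m.

End Defs.

(* Main.v *)
Require Import Defs.
From HB Require Import structures.
From mathcomp Require Import all_boot all_order all_algebra.
From mathcomp Require Import all_classical all_reals all_analysis.
From mathcomp Require Import zify ring lra.
Import Order.TTheory GRing.Theory Num.Theory numFieldNormedType.Exports.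
Local Open Scope classical_set_scope.
Local Open Scope ring_scope.

Lemma supnorm_ge0 (R : realType) (m : nat) (y : 'cV[R]_m) : 0 <= supnorm y.
Proof.
rewrite /supnorm; elim/big_ind: _ => //.
by move=> x z hx hz; rewrite le_max hx.
Qed.

Lemma distZ_ge0 {R : realType} {m : nat} (y : 'cV[R]_m) : 0 <= distZ y.
Proof.
apply: lb_le_inf.
  by exists (supnorm (y - map_mx (fun z : int => z%:~R) 0)); exists 0.
by move=> _ [p _ <-]; apply: supnorm_ge0.
Qed.

Lemma isupnorm_ge (n : nat) (q : 'cV[int]_n) i : (absz (q i ord0) <= isupnorm q)%N.
Proof. by rewrite /isupnorm (bigD1 i) //= leq_maxl. Qed.

Lemma finite_ball (n M : nat) : finite_set [set q : 'cV[int]_n | (isupnorm q <= M)%N].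
Proof.
apply: (@sub_finite_set _ _
  ((fun x : 'cV['I_(2*M).+1]_n => map_mx (fun i : 'I_(2*M).+1 => (i : nat)%:Z - M%:Z) x) @` setT)).
  move=> q /= hq.
  exists (\matrix_(i, j) inord (absz (q i j + M%:Z)%R)) => //.
  apply/matrixP => i j; rewrite !mxE (ord1 j).
  have h1 := @isupnorm_ge _ q i.
  move: (q i ord0) h1 => z h1.
  have h2 : (absz (z + M%:Z)%R < (2*M).+1)%N by lia.
  rewrite inordK //; lia.

by apply: finite_image; apply: finite_finset.
Qed.

Lemma cauchy_ex (R : realType) (u : nat -> R) : cvgn (series u) ->
  forall e : R, 0 < e -> exists N, forall a b, (N <= a)%N -> (N <= b)%N -> `|\sum_(a <= k < b) u k| < e.
Proof.
move=> cu e e0.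
have := (cauchy_seriesP u).1 (cvg_cauchy _ cu) e e0.
case=> -[A B] /= [[N1 _ HA] [N2 _ HB]] H.
exists (maxn N1 N2) => a b ha hb.
apply: (H (a, b)); split => /=; [apply: HA|apply: HB] => /=; lia.
Qed.

Lemma lerXn2 {R : realType} k (x y : R) : 0 <= x -> x <= y -> x ^+ k <= y ^+ k.
Proof. move=> hx hxy; apply: lerXn2r => //; rewrite nnegrE //; exact: le_trans hxy. Qed.

Lemma half_pow {R : realType} (x y : R) j :
  x ^+ j.+1 * y / 2 ^+ j.+1 = (x / 2) ^+ j * y * (x / 2).
Proof.
rewrite expr_div_n !exprS; field.
by rewrite expf_neq0.
Qed.

Lemma aux1 {R : realType} (d b x : R) : 0 <= d -> 0 < b -> 2 * d <= x -> b <= x -> d < x.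
Proof. move=> *; lra. Qed.
Lemma aux2 {R : realType} (d p : R) : d < p / 2 -> 2 * d <= p.
Proof. move=> *; lra. Qed.
Lemma aux3 {R : realType} (a b e : R) : a <= e -> b <= e -> a + b <= 2 * e.
Proof. move=> *; lra. Qed.
Lemma aux4 {R : realType} (d : R) : 0 <= d -> 0 <= 2 * d.
Proof. move=> *; lra. Qed.

Lemma aux5 {R : realType} (a a' : R) (K K' n : nat) : 0 <= a -> a <= a' ->
  (0 < K)%N -> (K <= K')%N -> a / K'%:R ^+ n <= a' / K%:R ^+ n.
Proof.
move=> ha haa hK hKK.
have hK' : (0 < K')%N by exact: leq_trans hK hKK.
apply: ler_pM => //.
rewrite lef_pV2 ?posrE ?exprn_gt0 ?ltr0n //.
by apply: lerXn2 => //; rewrite ler_nat.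
Qed.
Lemma aux6 {R : realType} (x : R) : x <= 2 * 1 -> x <= 4 - 2 * 1.
Proof. move=> *; lra. Qed.
Lemma aux7 {R : realType} (s t x e : R) : s <= 4 - 2 * e -> t <= x -> x <= 2 * (e / 2) ->
  s + t <= 4 - 2 * (e / 2).
Proof. move=> *; lra. Qed.
Lemma aux8 {R : realType} (s e : R) : 0 <= e -> s <= 4 - 2 * e -> s <= 4.
Proof. move=> *; lra. Qed.

Lemma dir1 (R : realType) (m n : nat) (hm : (0 < m)%N) (hn : (0 < n)%N)
  (A : 'M[R]_(m, n)) (g : 'cV[R]_m) (psi : nat -> R) :
  classC m n psi -> W psi A g -> ~ Bad A g.
Proof.
move=> [hpos [hdec hcv]] [_ [_ hinf]] [_ [_ [c [c0 [N hB]]]]].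
set u := fun k : nat => (k.+1)%:R ^+ n.-1 * psi k.+1 ^+ m.
have e0 : 0 < c / 2 ^+ n by rewrite divr_gt0 // exprn_gt0.
have [N0 hN0] := @cauchy_ex R u hcv _ e0.
pose M := maxn N (2 * N0 + 2).
have [q [hq1 hq2]] : exists q : 'cV[int]_n,
    distZ (Aq A q - g) < psi (isupnorm q) /\ (M < isupnorm q)%N.
  apply: contrapT => hno; apply: hinf; apply: (sub_finite_set _ (finite_ball n M)).
  move=> q /= hq; rewrite leqNgt; apply/negP => hlt; apply: hno; exists q; split => //.
move: hq1 hq2 (hB q); set k := isupnorm q => hq1 hq2 hBq.
have hk1 : (1 <= k)%N by lia.
have hkN : (N <= k)%N by lia.
have hD0 := distZ_ge0 (Aq A q - g : 'cV[R]_m).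
have hpk : 0 <= psi k := hpos k hk1.
have hc : c <= k%:R ^+ n * psi k ^+ m.
  apply: le_trans (hBq hkN) _; apply: ler_wpM2l; first exact: exprn_ge0.
  by apply: lerXn2 => //; apply: ltW.
have hsum : c / 2 ^+ n <= \sum_(k./2 <= i < k) u i.
  have hterm : forall i, (k./2 <= i < k)%N ->
      (k%:R / 2) ^+ n.-1 * psi k ^+ m <= u i.
    move=> i /andP [hi1 hi2]; rewrite /u; apply: ler_pM.
    - by apply: exprn_ge0; rewrite divr_ge0.
    - exact: exprn_ge0.
    - apply: lerXn2; first by rewrite divr_ge0.
      by rewrite ler_pdivrMr // -natrM ler_nat; lia.
    - by apply: lerXn2 => //; apply: hdec; lia.
  apply: le_trans (ler_sum_nat hterm); rewrite sumr_const_nat.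
  apply: (@le_trans _ _ (k%:R ^+ n * psi k ^+ m / 2 ^+ n)).
    by apply: ler_wpM2r => //; rewrite invr_ge0 exprn_ge0.
  have -> : k%:R ^+ n * psi k ^+ m / 2 ^+ n
      = (k%:R / 2) ^+ n.-1 * psi k ^+ m * (k%:R / 2).
    by rewrite -[in LHS](prednK hn) half_pow.
  rewrite -[_ *+ (k - _)]mulr_natr; apply: ler_wpM2l.
    by apply: mulr_ge0; [apply: exprn_ge0; rewrite divr_ge0|apply: exprn_ge0].
  by rewrite ler_pdivrMr // -natrM ler_nat; lia.
have habs := hN0 (k./2) k ltac:(lia) ltac:(lia).
by move: (le_lt_trans (le_trans hsum (ler_norm _)) habs); rewrite ltxx.
Qed.

Lemma dir2 (R : realType) (m n : nat) (hm : (0 < m)%N) (hn : (0 < n)%N)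
  (A : 'M[R]_(m, n)) (g : 'cV[R]_m) :
  in_unit_mx A -> in_unit_mx g ->
  (forall c : R, 0 < c -> forall N : nat, exists q : 'cV[int]_n,
     (N <= isupnorm q)%N /\ (isupnorm q)%:R ^+ n * distZ (Aq A q - g) ^+ m < c) ->
  Lambda A g.
Proof.
move=> hA hg hNB.
pose D (q : 'cV[int]_n) := distZ (Aq A q - g).
have hD0 : forall q, 0 <= D q by move=> q; apply: distZ_ge0.
have hex : forall x : R * nat, exists q : 'cV[int]_n, 0 < x.1 ->
    (x.2 <= isupnorm q)%N /\ (isupnorm q)%:R ^+ n * D q ^+ m < x.1.
  move=> -[c N] /=; case: (pselect (0 < c)) => hc.
    by have [q hq] := hNB c hc N; exists q.
  by exists 0 => h; exfalso; exact: hc h.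
have [f hf] := choice hex.
pose ee (j : nat) : R := (2 ^+ j)^-1.
have ee_gt0 : forall j, 0 < ee j by move=> j; rewrite invr_gt0 exprn_gt0.
have ee_le1 : forall j, ee j <= 1 by move=> j; rewrite invf_le1 ?exprn_gt0 // exprn_ege1 // ler1n.
have eeS : forall j, ee j.+1 = ee j / 2.
  by move=> j; rewrite /ee exprS invfM mulrC.
pose step (j : nat) (p : 'cV[int]_n * R) :=
  let q := f (Num.min (ee j / 2 ^+ m) ((p.2 / 2) ^+ m), (isupnorm p.1).+1) in
  (q, Num.max (2 * D q) (ee j / (isupnorm q)%:R ^+ n)).
have hstep : forall j p, 0 < p.2 -> ee j / ((isupnorm p.1).+1)%:R ^+ n <= p.2 ->
  [/\ (isupnorm p.1 < isupnorm (step j p).1)%N, D (step j p).1 < (step j p).2,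
      ee j / (isupnorm (step j p).1)%:R ^+ n <= (step j p).2,
      (step j p).2 <= p.2 &
      (isupnorm (step j p).1)%:R ^+ n * (step j p).2 ^+ m <= 2 * ee j].
  move=> j p hp hp2.
  set c := Num.min (ee j / 2 ^+ m) ((p.2 / 2) ^+ m).
  have hc : 0 < c.
    by rewrite lt_min divr_gt0 ?exprn_gt0 ?divr_gt0.
  have [hK hlt] := hf (c, (isupnorm p.1).+1) hc.
  rewrite /step /=; rewrite -/c.
  move: hK hlt; set q := f (c, (isupnorm p.1).+1) => /= hK hlt.
  set K := isupnorm q in hK hlt *.
  have hKr : 1 <= K%:R :> R by rewrite ler1n; exact: leq_ltn_trans (leq0n _) hK.
  have hKn : 1 <= K%:R ^+ n :> R by apply: exprn_ege1.
  have hKn0 : 0 < K%:R ^+ n :> R by apply: lt_le_trans hKn.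
  have hDm : D q ^+ m < c.
    by apply: le_lt_trans hlt; apply: ler_peMl => //; apply: exprn_ge0.
  have hc1 : c <= ee j / 2 ^+ m by rewrite ge_min lexx.
  have hc2 : c <= (p.2 / 2) ^+ m by rewrite ge_min lexx orbT.
  have hD2 : D q < p.2 / 2.
    have := lt_le_trans hDm hc2; rewrite ltr_pXn2r // nnegrE //.
    by rewrite divr_ge0 // ltW.
  set b := ee j / K%:R ^+ n.
  have hb0 : 0 < b by rewrite divr_gt0.
  have hmax1 : 2 * D q <= Num.max (2 * D q) b by rewrite le_max lexx.
  have hmax2 : b <= Num.max (2 * D q) b by rewrite le_max lexx orbT.
  have hDq := hD0 q.
  split => //.
  - exact: aux1 hDq hb0 hmax1 hmax2.
  - rewrite ge_max; apply/andP; split; first exact: aux2.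
    apply: le_trans hp2; apply: ler_wpM2l; first exact: ltW.
    rewrite lef_pV2 ?posrE ?exprn_gt0 //.
      by apply: (@lerXn2 R) => //; rewrite ler_nat.
    by rewrite ltr0n (leq_ltn_trans (leq0n _) hK).
  - have hmx : Num.max (2 * D q) b ^+ m <= (2 * D q) ^+ m + b ^+ m.
      rewrite maxEle; case: ifP => _.
        by rewrite lerDr exprn_ge0 // aux4.
      by rewrite lerDl exprn_ge0 // ltW.
    apply: le_trans (ler_wpM2l (ltW hKn0) hmx) _.
    rewrite mulrDr.
    have h1 : K%:R ^+ n * (2 * D q) ^+ m <= ee j.
      rewrite exprMn mulrCA.
      have : K%:R ^+ n * D q ^+ m < ee j / 2 ^+ m by apply: lt_le_trans hlt hc1.
      rewrite ltr_pdivlMr ?exprn_gt0 // => h; rewrite mulrC; exact: ltW.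
    have h2 : K%:R ^+ n * b ^+ m <= ee j.
      have hb1 : b <= 1 by rewrite ler_pdivrMr // mul1r; apply: le_trans (ee_le1 j) hKn.
      apply: (@le_trans _ _ (K%:R ^+ n * b)).
        by apply: ler_wpM2l; [exact: ltW | apply: ler_iXnr => //; exact: ltW].
      by rewrite /b mulrC divfK // gt_eqF.
    exact: aux3.
pose s := fix s (j : nat) : 'cV[int]_n * R :=
  if j is j'.+1 then step j (s j') else step 0%N (0, 1).
pose prev (j : nat) : 'cV[int]_n * R := if j is j'.+1 then s j' else (0, 1).
have hs : forall j, s j = step j (prev j) by case.
have hprev : forall j, 0 < (prev j).2 /\
    ee j / ((isupnorm (prev j).1).+1)%:R ^+ n <= (prev j).2.
  elim=> [|j [h1 h2]].
    split; first by rewrite /= ltr01.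
    rewrite /= ler_pdivrMr ?exprn_gt0 ?ltr0Sn // mul1r.
    by apply: le_trans (ee_le1 0%N) _; apply: exprn_ege1; rewrite ler1n.
  have [h3 _ h4 _ _] := hstep j (prev j) h1 h2.
  rewrite -hs in h3 h4; change (prev j.+1) with (s j).
  have hK1 : (0 < isupnorm (s j).1)%N by exact: leq_ltn_trans (leq0n _) h3.
  split.
    by apply: lt_le_trans h4; rewrite divr_gt0 ?exprn_gt0 ?ltr0n.
  apply: le_trans h4; apply: aux5 => //; first exact: ltW.
  by rewrite eeS ler_pdivrMr // ler_peMr ?ler1n // ltW.
pose qs j := (s j).1. pose ds j := (s j).2. pose K j := isupnorm (qs j).
have H : forall j, [/\ (isupnorm (prev j).1 < K j)%N, D (qs j) < ds j,
    ee j / (K j)%:R ^+ n <= ds j, ds j <= (prev j).2 &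
    (K j)%:R ^+ n * ds j ^+ m <= 2 * ee j].
  move=> j; rewrite /K /qs /ds hs; have [h1 h2] := hprev j; exact: hstep.
have hKS : forall j, (K j < K j.+1)%N by move=> j; have [] := H j.+1.
have hdsS : forall j, ds j.+1 <= ds j by move=> j; have [] := H j.+1.
have hds0 : forall j, 0 < ds j by move=> j; exact: (hprev j.+1).1.
have hKj : forall j, (j < K j)%N.
  elim=> [|j IH]; first by have [h _ _ _ _] := H 0%N; exact: leq_ltn_trans (leq0n _) h.
  exact: leq_ltn_trans IH (hKS j).
have hKlt : {homo K : i j / (i < j)%N} := @homo_ltn _ K _ (fun y x z => @ltn_trans y x z) hKS.
have hKle : {homo K : i j / (i <= j)%N} :=
  @homo_leq _ K _ leqnn (fun y x z => @leq_trans y x z) (fun i => ltnW (hKS i)).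
have hdsle : forall a b, (a <= b)%N -> ds b <= ds a := (nonincreasing_seqP ds).1 hdsS.
have exK : forall k, exists j, (k <= K j)%N by move=> k; exists k; apply: ltnW.
pose J k := ex_minn (exK k).
have hJ1 : forall k, (k <= K (J k))%N by move=> k; rewrite /J; case: ex_minnP.
have hJ2 : forall k i, (k <= K i)%N -> (J k <= i)%N.
  by move=> k i; rewrite /J; case: ex_minnP => j _ h /h.
have hJK : forall j, J (K j) = j.
  move=> j; apply/eqP; rewrite eqn_leq hJ2 //=.
  rewrite leqNgt; apply/negP => /hKlt; by rewrite ltnNge hJ1.
have hJmono : forall k k', (k <= k')%N -> (J k <= J k')%N.
  by move=> k k' h; apply: hJ2; exact: leq_trans h (hJ1 k').
have hJblk : forall j k, (K j < k)%N -> (k <= K j.+1)%N -> J k = j.+1.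
  move=> j k h1 h2; apply/eqP; rewrite eqn_leq hJ2 //=.
  rewrite ltnNge; apply/negP => /hKle hle.
  by have := leq_trans (hJ1 k) hle; rewrite leqNgt h1.
have hJblk0 : forall k, (k <= K 0%N)%N -> J k = 0%N.
  by move=> k h; apply/eqP; rewrite -leqn0; apply: hJ2.
pose psi k := ds (J k).
pose u := fun k : nat => (k.+1)%:R ^+ n.-1 * psi k.+1 ^+ m.
have hu0 : forall k, 0 <= u k.
  move=> k; apply: mulr_ge0; first exact: exprn_ge0.
  by apply: exprn_ge0; apply: ltW; apply: hds0.
have hblock : forall a b (dl : R), 0 <= dl -> (a <= b)%N ->
    (forall k, (a <= k < b)%N -> psi k.+1 = dl) ->
    \sum_(a <= k < b) u k <= b%:R ^+ n * dl ^+ m.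
  move=> a b dl hdl hab hk.
  apply: le_trans (@ler_sum_nat _ _ _ _ (fun _ => b%:R ^+ n.-1 * dl ^+ m) _) _.
    move=> k hk'; rewrite /u (hk k hk'); apply: ler_wpM2r; first exact: exprn_ge0.
    by apply: lerXn2 => //; rewrite ler_nat; case/andP: hk'.
  rewrite sumr_const_nat -[_ *+ (b - a)]mulr_natr -[in X in _ <= X](prednK hn) exprS.
  apply: (@le_trans _ _ (b%:R ^+ n.-1 * dl ^+ m * b%:R)).
    apply: ler_wpM2l; first by apply: mulr_ge0; apply: exprn_ge0.
    by rewrite ler_nat leq_subr.
  by rewrite mulrC mulrA.
have hser : forall j, series u (K j) <= 4 - 2 * ee j.
  elim=> [|j IH].
    rewrite /series /=.
    apply: le_trans (hblock 0%N (K 0%N) (ds 0%N) (ltW (hds0 0%N)) (leq0n _) _) _.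
      by move=> k /andP[_ hk]; rewrite /psi hJblk0.
    have [_ _ _ _ h5] := H 0%N.
    have ee0 : ee 0%N = 1 by rewrite /ee expr0 invr1.
    by rewrite ee0 in h5 *; apply: aux6.
  move: IH; rewrite /series /= (big_cat_nat (leq0n (K j)) (ltnW (hKS j))) /= => IH.
  have hb := hblock (K j) (K j.+1) (ds j.+1) (ltW (hds0 _)) (ltnW (hKS j)).
  have [_ _ _ _ h5] := H j.+1.
  rewrite eeS in h5 *.
  apply: aux7 IH (hb _) h5.
  by move=> k /andP[h1 h2]; rewrite /psi (hJblk j k.+1).
have hub : forall N, series u N <= 4.
  move=> N.
  have h1 : series u N <= series u (K N).
    rewrite /series /= (big_cat_nat (leq0n N) (ltnW (hKj N))) /= lerDl.
    by apply: sumr_ge0 => k _; exact: hu0.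
  have := le_trans h1 (hser N).
  have := ee_gt0 N; set e := ee N; move: (series u N) => x.
  move=> he hx; exact: (@aux8 R x e (ltW he) hx).
exists psi; split.
  split; first by move=> k _; exact: ltW (hds0 _).
  split; first by move=> a b /andP [_ hab]; apply: hdsle; exact: hJmono.
  apply: nondecreasing_is_cvgn.
    move=> a b hab; rewrite /series /= (big_cat_nat (leq0n a) hab) /= lerDl.
    by apply: sumr_ge0 => k _; exact: hu0.
  by exists 4 => _ [N _ <-]; exact: hub N.
split; first exact: hA. split; first exact: hg.
move=> hfin; apply: infinite_nat.
have hset : [set: nat] = qs @^-1` [set q | D q < psi (isupnorm q)].
  apply/seteqP; split => // j _ /=.
  change (D (qs j) < ds (J (K j))); rewrite hJK; by have [] := H j.
rewrite hset; apply: finite_preimage hfin => a b _ _ hab.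
have hK : K a = K b by rewrite /K hab.
case: (ltngtP a b) => // hab'.
  by move: (hKlt _ _ hab'); rewrite hK ltnn.
by move: (hKlt _ _ hab'); rewrite hK ltnn.
Qed.

Lemma notBad (R : realType) (m n : nat) (A : 'M[R]_(m, n)) (g : 'cV[R]_m) :
  in_unit_mx A -> in_unit_mx g -> ~ Bad A g ->
  (forall c : R, 0 < c -> forall N : nat, exists q : 'cV[int]_n,
     (N <= isupnorm q)%N /\ (isupnorm q)%:R ^+ n * distZ (Aq A q - g) ^+ m < c).
Proof.
move=> hA hg hnb c c0 N; apply: contrapT => hno; apply: hnb.
split => //; split => //; exists c; split => //; exists N => q hq.
by rewrite leNgt; apply/negP => hlt; apply: hno; exists q.
Qed.

Theorem corollary1p2 (R : realType) (m n : nat) (hm : (0 < m)%N) (hn : (0 < n)%N) :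
  (forall A : 'M[R]_(m, n), in_unit_mx A ->
     forall g : 'cV[R]_m,
       Lambda A g <-> (in_unit_mx g /\ ~ Bad A g)) /\
  (forall g : 'cV[R]_m, in_unit_mx g ->
     forall A : 'M[R]_(m, n),
       Lambda A g <-> (in_unit_mx A /\ ~ Bad A g)).
Proof.
split.
  move=> A hA g; split.
    move=> [psi [hC hW]]; split; first by case: hW => _ [].
    exact: dir1 hm hn _ _ _ hC hW.
  move=> [hg hnb]; apply: dir2 => //; exact: notBad.
move=> g hg A; split.
  move=> [psi [hC hW]]; split; first by case: hW.
  exact: dir1 hm hn _ _ _ hC hW.
move=> [hA hnb]; apply: dir2 => //; exact: notBad.
Qed.
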